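(* Fix $h$ in the interior of $\mathcal H$. Let $\eta$ be a Borel probability measure on $\mathcal Y_h$ with finite first moment and $\int y\,\eta(dy)=0$. Define the measure $\rho:=(S_h)_\#\bigl((1-h^\top y)\,\eta(dy)\bigr)$ on $\mathcal X_d$. Then $\rho\in\mathfrak M_d$, the measure $q_h(dx):=(1+h^\top x)\rho(dx)$ satisfies $(T_h)_\#q_h=\eta$, and $\rho$ is the unique element $\rho'\in\mathfrak M_d$ whose fiber $(T_h)_\#\bigl((1+h^\top x)\rho'(dx)\bigr)$ equals $\eta$.
   Context: Fix an integer $d\ge 2$. Let $H\in\mathbb R^{d\times(d-1)}$ have orthonormal columns spanning $T_d:=\{u\in\mathbb R^d:\mathbf 1^\top u=0\}$, and set $\gamma_i:=H^\top e_i\in\mathbb R^{d-1}$ ($i=1,\dots,d$). Let $\mathcal X_d:=\{x\in\mathbb R^{d-1}:1+\gamma_i^\top x\ge0\ \forall i\}$ and $\mathcal H:=\mathrm{conv}\{\gamma_1,\dots,\gamma_d\}$. An anchored law is a Borel probability measure $\rho$ on $\mathcal X_d$ with $\int x\,\rho(dx)=0$; $\mathfrak M_d$ is the set of anchored laws. For $h\in\mathcal H$ define $\mathcal Y_h:=\{y\in\mathbb R^{d-1}:1+(\gamma_i-h)^\top y\ge 0\ \forall i\}$, $T_h(x):=x/(1+h^\top x)$ for $x\in\mathcal X_d$ with $1+h^\top x>0$, and $S_h(y):=y/(1-h^\top y)$ for $y\in\mathcal Y_h$ (one has $1-h^\top y>0$ on $\mathcal Y_h$). *)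

(* Defs.v *)
From HB Require Import structures.
From mathcomp Require Import all_boot all_order all_algebra.
From mathcomp Require Import all_classical all_reals all_analysis.
Set Implicit Arguments. Unset Strict Implicit. Unset Printing Implicit Defensive.
Import Order.TTheory GRing.Theory Num.Theory.
Local Open Scope classical_set_scope.
Local Open Scope ring_scope.

(* Points of R^(d-1) are represented as (d.-1).-tuples of reals; this type
   carries the library's product (= Borel) sigma-algebra. *)
Notation pt R n := (n.-tuple R).

Section Defs.
Variable R : realType.

Definition dot n (u v : pt R n) : R := \sum_(j < n) tnth u j * tnth v j.

Definition tscale n (c : R) (y : pt R n) : pt R n := map_tuple (fun a => c * a) y.

Variable d : nat.

Definition orthonormal_cols (H : 'M[R]_(d, d.-1)) : Prop := H^T *m H = 1%:M.
Definition spans_Td (H : 'M[R]_(d, d.-1)) : Prop :=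
  forall u : 'cV[R]_d, (\sum_(i < d) u i ord0 = 0) <-> exists c : 'cV[R]_(d.-1), u = H *m c.

(* gamma_i = H^T e_i, i.e. the i-th row of H, as a point of R^(d-1). *)
Definition gamma (H : 'M[R]_(d, d.-1)) (i : 'I_d) : pt R d.-1 :=
  mktuple (fun j => H i j).

Definition Xd (H : 'M[R]_(d, d.-1)) : set (pt R d.-1) :=
  [set x | forall i, 0 <= 1 + dot (gamma H i) x].

Definition convH (H : 'M[R]_(d, d.-1)) : set (pt R d.-1) :=
  [set h | exists lam : 'I_d -> R, (forall i, 0 <= lam i) /\ \sum_(i < d) lam i = 1 /\
     forall j, tnth h j = \sum_(i < d) lam i * tnth (gamma H i) j].

(* interior of conv{gamma_i} in R^(d-1) (with the product topology,
   i.e. the Euclidean one): some open cube around h lies in the hull. *)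
Definition interiorH (H : 'M[R]_(d, d.-1)) : set (pt R d.-1) :=
  [set h | exists2 e : R, 0 < e &
     forall z : pt R d.-1, (forall j, `|tnth z j - tnth h j| < e) -> convH H z].

Definition Yh (H : 'M[R]_(d, d.-1)) (h : pt R d.-1) : set (pt R d.-1) :=
  [set y | forall i, 0 <= 1 + (dot (gamma H i) y - dot h y)].

(* T_h(x) = x / (1 + h^T x)  (used only where 1 + h^T x > 0) *)
Definition Th (h : pt R d.-1) (x : pt R d.-1) : pt R d.-1 :=
  tscale (1 + dot h x)^-1 x.
(* S_h(y) = y / (1 - h^T y)  (used only on Y_h, where 1 - h^T y > 0) *)
Definition Sh (h : pt R d.-1) (y : pt R d.-1) : pt R d.-1 :=
  tscale (1 - dot h y)^-1 y.

Definition anchored (H : 'M[R]_(d, d.-1)) (rho : probability (pt R d.-1) R) : Prop :=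
  rho (Xd H) = 1%E /\
  forall j : 'I_d.-1,
    rho.-integrable (Xd H) (fun x => (tnth x j)%:E) /\
    (\int[rho]_(x in Xd H) (tnth x j)%:E = 0)%E.

(* The fiber (T_h)_# ((1 + h^T x) rho(dx)) equals eta: for every Borel B,
   int_{x in X_d, 1 + h^T x > 0, T_h x in B} (1 + h^T x) rho(dx) = eta(B). *)
Definition fiber_is (H : 'M[R]_(d, d.-1)) (h : pt R d.-1)
    (rho eta : probability (pt R d.-1) R) : Prop :=
  forall B : set (pt R d.-1), measurable B ->
    (\int[rho]_(x in [set x | Xd H x /\ (0 < 1 + dot h x)%R /\ B (Th h x)])
        (1 + dot h x)%R%:E)%E = eta B.

Definition rho_of (H : 'M[R]_(d, d.-1)) (h : pt R d.-1)
    (eta : probability (pt R d.-1) R) (A : set (pt R d.-1)) : \bar R :=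
  (\int[eta]_(y in [set y | Yh H h y /\ A (Sh h y)]) (1 - dot h y)%R%:E)%E.

End Defs.

(* Main.v *)
Require Import Defs.
From HB Require Import structures.
From mathcomp Require Import all_boot all_order all_algebra.
From mathcomp Require Import all_classical all_reals all_analysis.
From mathcomp Require Import measurable_realfun.
From mathcomp.algebra_tactics Require Import ring lra.
Import Order.TTheory GRing.Theory Num.Theory.
Local Open Scope classical_set_scope.
Local Open Scope ring_scope.

Section meas.
Context (R : realType).

Lemma mpre d1 d2 (T1 : measurableType d1) (T2 : measurableType d2) (f : T1 -> T2) (A : set T2) :
  measurable_fun setT f -> measurable A -> measurable (f @^-1` A).
Proof. by move=> mf mA; rewrite -[_ @^-1` _]setTI; exact: mf. Qed.

Lemma measurable_inv : measurable_fun [set: R] (fun x : R => x^-1).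
Proof.
have -> : [set: R] = [set 0] `|` ~` [set 0] by rewrite setUv.
have m0 : measurable [set (0:R)] by exact: measurable_set1.
apply/measurable_funU => //; first exact: measurableC.
split.
- move=> _ Y mY.
  have [Y0|Y0] := pselect (Y 0^-1).
    rewrite (_ : _ `&` _ = [set 0]) //; apply/seteqP; split => x /=.
      by case.
    by move=> ->; split.
  rewrite (_ : _ `&` _ = set0) //; apply/seteqP; split => x //=.
  by case => -> /=.
- apply: measurable_realfun.open_continuous_measurable_fun.
    by apply: closed_openC; apply: accessible_closed_set1; apply: hausdorff_accessible; exact: Rhausdorff.
  move=> x; rewrite inE /= => x0; apply: inv_continuous; exact/eqP.
Qed.

Lemma measurable_dot n (u : pt R n) : measurable_fun [set: pt R n] (fun y => dot u y).
Proof.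
rewrite /dot; apply: measurable_sum => j.
apply: measurable_realfun.measurable_funM => //; exact: measurable_tnth.
Qed.

Lemma measurable_tscale n (c : pt R n -> R) : measurable_fun setT c ->
  measurable_fun setT (fun y => tscale (c y) y).
Proof.
move=> mc; apply/measurable_fun_tnthP => j.
rewrite (_ : _ \o _ = fun y => c y * tnth y j); last first.
  by apply/funext => y /=; rewrite /tscale tnth_map.
apply: measurable_realfun.measurable_funM => //; exact: measurable_tnth.
Qed.

Lemma measurable_le0 d1 (T : measurableType d1) (f : T -> R) : measurable_fun setT f ->
  measurable [set x | 0 <= f x].
Proof.
move=> mf; apply: (@mpre _ _ _ _ (fun x => 0 <= f x) [set true]) => //.
exact: measurable_realfun.measurable_fun_ler.
Qed.

Lemma measurable_lt0 d1 (T : measurableType d1) (f : T -> R) : measurable_fun setT f ->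
  measurable [set x | 0 < f x].
Proof.
move=> mf; apply: (@mpre _ _ _ _ (fun x => 0 < f x) [set true]) => //.
exact: measurable_realfun.measurable_fun_ltr.
Qed.

End meas.

Section dens.
Context d (T : measurableType d) (R : realType) (mu : {measure set T -> \bar R}).
Local Open Scope ereal_scope.

Definition densF (g : T -> R) (mg : measurable_fun setT g) (g0 : forall x, (0 <= g x)%R) :
  set T -> \bar R := fun A => \int[mu]_(x in A) (g x)%:E.

Lemma densF0 g mg g0 : @densF g mg g0 set0 = 0.
Proof. by rewrite /densF integral_set0. Qed.
Lemma densF_ge0 g mg g0 A : 0 <= @densF g mg g0 A.
Proof. by apply: integral_ge0 => x _; rewrite lee_fin. Qed.
Lemma densF_sa g mg g0 : semi_sigma_additive (@densF g mg g0).
Proof.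
apply: semi_sigma_additive_nng_induced => //; first exact/measurable_EFinP.
Qed.

HB.instance Definition _ g mg g0 := isMeasure.Build _ _ _ (@densF g mg g0)
  (@densF0 g mg g0) (@densF_ge0 g mg g0) (@densF_sa g mg g0).

Import HBNNSimple.

Lemma integral_densF (gr : T -> R) mg g0 f E : (forall x, 0 <= f x) ->
    measurable E -> measurable_fun E f ->
  \int[@densF gr mg g0]_(x in E) f x = \int[mu]_(x in E) (f x * (gr x)%:E).
Proof.
move=> f0 mE mf; set nu := @densF gr mg g0; set g := EFin \o gr.
have mgE : measurable_fun E g by apply: measurable_funTS; exact/measurable_EFinP.
have gge0 x : 0 <= g x by rewrite lee_fin.
pose h := nnsfun_approx mE mf.
have -> : \int[nu]_(x in E) f x =
    lim (\int[nu]_(x in E) (EFin \o h n) x @[n --> \oo]).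
  have fE x : E x -> f x = lim ((EFin \o h n) x @[n --> \oo]).
    by move=> Ex; apply/esym/cvg_lim => //; exact: cvg_nnsfun_approx.
  under eq_integral => x /[!inE] /fE -> //.
  apply: monotone_convergence => //.
  - move=> n; apply/measurable_EFinP.
    by apply: (measurable_funS measurableT) => //; exact/measurable_funP.
  - by move=> n x Ex //=; rewrite lee_fin.
  - by move=> x Ex a b ab; rewrite lee_fin; exact/lefP/nd_nnsfun_approx.
have -> : \int[mu]_(x in E) (f x * g x) =
    lim (\int[mu]_(x in E) ((EFin \o h n) \* g) x @[n --> \oo]).
  have fg x : E x -> f x * g x = lim (((EFin \o h n) \* g) x @[n --> \oo]).
    by move=> Ex; apply/esym/cvg_lim => //; apply: cvgeZr;
      [by [] |exact: cvg_nnsfun_approx].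
  under eq_integral => x /[!inE] /fg -> //.
  apply: monotone_convergence => [//| | |].
  - move=> n; apply/emeasurable_funM => //; apply/measurable_funTS.
      exact/measurable_EFinP.
  - by move=> n x Ex /=; rewrite mule_ge0 ?lee_fin.
  - by move=> x Ex a b ab/=; rewrite lee_wpmul2r ?lee_fin//; exact/lefP/nd_nnsfun_approx.
suff suf n : \int[mu]_(x in E) (((EFin \o h n) \* g) x) =
    \int[nu]_(x in E) (EFin \o h n) x.
  by rewrite (_ : (fun n => \int[nu]_(x in E) (EFin \o h n) x) = (fun n => \int[mu]_(x in E) ((EFin \o h n) x * g x))) //; apply/funext => n; rewrite suf.
transitivity (\int[nu]_(x in E)
   (\sum_(y \in range (h n)) (y * \1_(h n @^-1` [set y]) x)%:E)); last first.
  by apply: eq_integral => t tE; rewrite /= fimfunE -fsumEFin.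
have indich m r : measurable_fun E (fun x => (r * \1_(h m @^-1` [set r]) x)%:E).
  by apply: (measurable_comp measurableT) => //; exact: measurable_funM.
rewrite ge0_integral_fsum//; last by move=> m y Ey; exact: nnfun_muleindic_ge0.
transitivity (\int[mu]_(x in E) (\sum_(y \in range (h n))
    (y * \1_(h n @^-1` [set y]) x)%:E * g x)).
  under [RHS]eq_integral => x xE.
    rewrite -ge0_mule_fsuml => [|y]; last exact: nnfun_muleindic_ge0.
    rewrite fsumEFin // -(fimfunE _ x); over.
  by [].
rewrite ge0_integral_fsum//; last 2 first.
  - by move=> y; apply: emeasurable_funM => //.
  - by move=> m y Ey; rewrite mule_ge0 // nnfun_muleindic_ge0.
apply: eq_fsbigr => r rhn.
under [RHS]eq_integral do rewrite EFinM.
rewrite integralZl_indic_nnsfun => //.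
under eq_integral do rewrite EFinM -muleA.
rewrite ge0_integralZl//.
- under eq_integral do rewrite muleC.
  rewrite (eq_integral (g \_ (h n @^-1` [set r]))); last first.
    by move=> x xE; rewrite epatch_indic.
  by rewrite -integral_mkcondr integral_indic// setIC.
- by apply: emeasurable_funM => //; exact/measurable_EFinP.
- by move=> t Et; rewrite mule_ge0 ?lee_fin.
- by move: rhn; rewrite inE => -[t _ <-]; rewrite lee_fin.
Qed.

End dens.

Section pushM.
Context d1 d2 (T1 : measurableType d1) (T2 : measurableType d2) (R : realType).
Local Open Scope ereal_scope.
Variable m : {measure set T1 -> \bar R}.

Definition pushM (f : T1 -> T2) (mf : measurable_fun setT f) : set T2 -> \bar R :=
  fun A => m (f @^-1` A).

Lemma pushM0 f mf : @pushM f mf set0 = 0.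
Proof. by rewrite /pushM preimage_set0 measure0. Qed.
Lemma pushM_ge0 f mf A : 0 <= @pushM f mf A.
Proof. by apply: measure_ge0. Qed.
Lemma pushM_sa f mf : semi_sigma_additive (@pushM f mf).
Proof.
move=> F mF tF mUF; rewrite /pushM preimage_bigcup.
apply: measure_semi_sigma_additive.
- by move=> n; rewrite -[X in measurable X]setTI; exact: mf.
- apply/trivIsetP => /= i j _ _ ij; rewrite -preimage_setI.
  by move/trivIsetP : tF => /(_ _ _ _ _ ij) ->//; rewrite preimage_set0.
- by rewrite -preimage_bigcup -[X in measurable X]setTI; exact: mf.
Qed.

HB.instance Definition _ f mf := isMeasure.Build _ _ _ (@pushM f mf)
  (@pushM0 f mf) (@pushM_ge0 f mf) (@pushM_sa f mf).

Lemma integral_pushM f mf D (F : T2 -> \bar R) : measurable D -> measurable_fun D F ->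
  (forall y, D y -> 0 <= F y) ->
  \int[@pushM f mf]_(y in D) F y = \int[m]_(x in f @^-1` D) F (f x).
Proof.
move=> mD mF F0; apply: (ge0_integral_pushforward mf m mD mF).
by move=> y; rewrite inE; exact: F0.
Qed.

End pushM.

Section patchlem.
Context d (T : measurableType d) (R : realType).
Local Open Scope ereal_scope.

Lemma int_patch (mu : {measure set T -> \bar R}) (D1 D2 : set T) (f1 f2 : T -> \bar R) :
  (forall x, (f1 \_ D1) x = (f2 \_ D2) x) ->
  \int[mu]_(x in D1) f1 x = \int[mu]_(x in D2) f2 x.
Proof.
by move=> e; rewrite (integral_mkcond D1) (integral_mkcond D2); apply: eq_integral => x _; exact: e.
Qed.

Lemma patchT (D : set T) (f : T -> \bar R) x : D x -> (f \_ D) x = f x.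
Proof. by move=> Dx; rewrite /patch mem_set. Qed.

Lemma patchN (D : set T) (f : T -> \bar R) x : ~ D x -> (f \_ D) x = 0.
Proof. by move=> Dx; rewrite /patch memNset. Qed.

End patchlem.

Section alg.
Context (R : realType) (n : nat).
Implicit Types (u y : pt R n) (c : R).

Lemma tnth_tscale c y j : tnth (tscale c y) j = c * tnth y j.
Proof. by rewrite /tscale tnth_map. Qed.

Lemma dot_tscale u c y : dot u (tscale c y) = c * dot u y.
Proof.
rewrite /dot mulr_sumr; apply: eq_bigr => j _.
by rewrite tnth_tscale mulrCA.
Qed.

Lemma tscaleM c c' y : tscale c (tscale c' y) = tscale (c * c') y.
Proof. by apply: eq_from_tnth => j; rewrite !tnth_tscale mulrA. Qed.

Lemma tscale1 y : tscale 1 y = y.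
Proof. by apply: eq_from_tnth => j; rewrite tnth_tscale mul1r. Qed.

End alg.

Section geom.
Context (R : realType) (d : nat) (H : 'M[R]_(d, d.-1)) (h : pt R d.-1).
Hypothesis hd : (2 <= d)%N.
Hypothesis Horth : orthonormal_cols H.
Hypothesis Hspan : spans_Td H.

Lemma colsum0 j : \sum_(i < d) H i j = 0.
Proof.
have := (proj2 (Hspan (col j H))) (ex_intro _ (delta_mx j 0) (colE j H)).
by under eq_bigr do rewrite mxE.
Qed.

Lemma sum_gamma y : \sum_(i < d) dot (gamma H i) y = 0.
Proof.
rewrite /dot exchange_big /=; rewrite big1 // => j _.
rewrite -mulr_suml; under eq_bigr do rewrite tnth_mktuple.
by rewrite colsum0 mul0r.
Qed.

Lemma Yh_pos y : Yh H h y -> 0 < 1 - dot h y.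
Proof.
move=> Yy.
have hsum : \sum_(i < d) (1 + (dot (gamma H i) y - dot h y)) = d%:R * (1 - dot h y).
  rewrite big_split /= big_split /= sum_gamma !sumr_const card_ord add0r.
  by rewrite mulrBr mulr1 mulr_natl mulNrn.


have d0 : 0 < d%:R :> R by rewrite ltr0n; case: (d) hd.
have ge : 0 <= 1 - dot h y.
  rewrite -(pmulr_rge0 _ d0) -hsum; apply: sumr_ge0 => i _; exact: Yy.
rewrite lt_neqAle ge andbT; apply/negP => /eqP e0.
have hy1 : dot h y = 1 by lra.
have all0 : forall i, dot (gamma H i) y = 0.
  move=> i; have : \sum_(i < d) (1 + (dot (gamma H i) y - dot h y)) = 0.
    by rewrite hsum -e0 mulr0.
  move/eqP; rewrite psumr_eq0; last by move=> k _; exact: Yy.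
  move/allP => /(_ i (mem_index_enum _)) /=; rewrite hy1 addrCA subrr addr0.
  by move/eqP.
pose yc : 'cV[R]_(d.-1) := \col_j tnth y j.
have Hy : H *m yc = 0.
  apply/matrixP => i k; rewrite !mxE; transitivity (dot (gamma H i) y); last exact: all0.
  by apply: eq_bigr => j _; rewrite !mxE tnth_mktuple.
have yc0 : yc = 0 by rewrite -[yc]mul1mx -Horth -mulmxA Hy mulmx0.
have : dot h y = 0.
  rewrite /dot big1 // => j _.
  have : yc j 0 = 0 by rewrite yc0 mxE.
  by rewrite mxE => ->; rewrite mulr0.
by rewrite hy1 => /eqP; rewrite oner_eq0.
Qed.


Lemma Sh_X y : Yh H h y -> Xd H (Sh h y).
Proof.
move=> Yy i; have p := Yh_pos _ Yy; have := Yy i; rewrite /Sh dot_tscale.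
set a := dot _ y; set b := dot h y => Yi.
have -> : 1 + (1 - b)^-1 * a = (1 - b)^-1 * (1 + (a - b)).
  by field; rewrite lt0r_neq0.
by apply: mulr_ge0 => //; rewrite invr_ge0 ltW.
Qed.

Lemma Sh_hpos y : Yh H h y -> 1 + dot h (Sh h y) = (1 - dot h y)^-1.
Proof.
move=> Yy; have p := Yh_pos _ Yy; rewrite /Sh dot_tscale.
by field; rewrite lt0r_neq0.
Qed.

Lemma ThSh y : Yh H h y -> Th h (Sh h y) = y.
Proof.
move=> Yy; have p := Yh_pos _ Yy.
rewrite /Th Sh_hpos // /Sh tscaleM invrK mulfV ?tscale1 //.
by rewrite lt0r_neq0.
Qed.

Lemma Th_Y x : Xd H x -> 0 < 1 + dot h x -> Yh H h (Th h x).
Proof.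
move=> Xx p i; have := Xx i; rewrite /Th !dot_tscale.
set a := dot _ x; set b := dot h x => Xi.
have -> : 1 + ((1 + b)^-1 * a - (1 + b)^-1 * b) = (1 + b)^-1 * (1 + a).
  by field; rewrite lt0r_neq0.
by apply: mulr_ge0 => //; rewrite invr_ge0 ltW.
Qed.

Lemma Th_h x : 0 < 1 + dot h x -> 1 - dot h (Th h x) = (1 + dot h x)^-1.
Proof. by move=> p; rewrite /Th dot_tscale; field; rewrite lt0r_neq0. Qed.

Lemma ShTh x : 0 < 1 + dot h x -> Sh h (Th h x) = x.
Proof.
move=> p; rewrite /Sh Th_h // /Th tscaleM invrK mulfV ?tscale1 //.
by rewrite lt0r_neq0.
Qed.

End geom.

Section measH.
Context (R : realType) (d : nat) (H : 'M[R]_(d, d.-1)) (h : pt R d.-1).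

Lemma mYh : measurable (Yh H h).
Proof.
rewrite (_ : Yh H h = \bigcap_(i in [set: 'I_d]) [set y | 0 <= 1 + (dot (gamma H i) y - dot h y)]).
  apply: fin_bigcap_measurable; first exact: finite_finset.
  move=> i _; apply: measurable_le0; apply: measurable_funD => //.
  by apply: measurable_funB; exact: measurable_dot.
by apply/seteqP; split => y /= Hy i; [move=> _|]; exact: Hy.
Qed.

Lemma mXd : measurable (Xd H).
Proof.
rewrite (_ : Xd H = \bigcap_(i in [set: 'I_d]) [set y | 0 <= 1 + dot (gamma H i) y]).
  apply: fin_bigcap_measurable; first exact: finite_finset.
  move=> i _; apply: measurable_le0; apply: measurable_funD => //.
  exact: measurable_dot.
by apply/seteqP; split => y /= Hy i; [move=> _|]; exact: Hy.
Qed.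

Lemma mSh : measurable_fun setT (Sh h).
Proof.
apply: measurable_tscale; apply: measurableT_comp; first exact: measurable_inv.
by apply: measurable_funB => //; exact: measurable_dot.
Qed.

Lemma mTh : measurable_fun setT (Th h).
Proof.
apply: measurable_tscale; apply: measurableT_comp; first exact: measurable_inv.
by apply: measurable_funD => //; exact: measurable_dot.
Qed.

End measH.


Section exist.
Context (R : realType) (d : nat) (H : 'M[R]_(d, d.-1)) (h : pt R d.-1).
Hypothesis hd : (2 <= d)%N.
Hypothesis Horth : orthonormal_cols H.
Hypothesis Hspan : spans_Td H.
Variable eta : probability (pt R d.-1) R.
Hypothesis etaY : eta (Yh H h) = 1%E.
Hypothesis eta_mom : forall j : 'I_d.-1, eta.-integrable setT (fun y => (tnth y j)%:E).
Hypothesis eta_mean : forall j : 'I_d.-1, (\int[eta]_y (tnth y j)%:E = 0)%E.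

Local Notation Y := (Yh H h).
Local Notation X := (Xd H).
Local Notation pT := (pt R d.-1).

Let Ypos y : Y y -> 0 < 1 - dot h y. Proof. exact: Yh_pos. Qed.
Let Shh y : Y y -> 1 + dot h (Sh h y) = (1 - dot h y)^-1.
Proof. exact: (@Sh_hpos R d H h hd Horth Hspan y). Qed.
Let ThSh' y : Y y -> Th h (Sh h y) = y.
Proof. exact: (@ThSh R d H h hd Horth Hspan y). Qed.

Definition gY (y : pT) : R := Num.max (1 - dot h y) 0 * \1_Y y.

Lemma mgY : measurable_fun setT gY.
Proof.
apply: measurable_funM; last by apply: measurable_indic; exact: mYh.
apply: measurable_maxr => //; apply: measurable_funB => //; exact: measurable_dot.
Qed.

Lemma gY0 y : 0 <= gY y.
Proof. by rewrite /gY mulr_ge0 // ?le_max ?lexx ?orbT. Qed.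

Lemma gYE y : Y y -> gY y = 1 - dot h y.
Proof.
move=> Yy; rewrite /gY indicE mem_set // mulr1.
by apply/max_idPl; rewrite ltW // Ypos.
Qed.

Lemma gYN y : ~ Y y -> gY y = 0.
Proof. by move=> Yy; rewrite /gY indicE memNset // mulr0. Qed.

Definition densY := @densF _ _ _ eta gY mgY gY0.
Definition rhoF := @pushM _ _ _ _ _ densY (Sh h) (@mSh R d h).

Local Open Scope ereal_scope.

Lemma ae_Y (f1 f2 : pT -> \bar R) : measurable_fun setT f1 -> measurable_fun setT f2 ->
  (forall y, Y y -> f1 y = f2 y) -> \int[eta]_y f1 y = \int[eta]_y f2 y.
Proof.
move=> m1 m2 e; apply: ae_eq_integral => //.
exists (~` Y); split.
- exact: measurableC (@mYh R d H h).
- by have := probability_setC eta (@mYh R d H h); rewrite etaY subee.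
- by move=> y /= nP Yy; apply: nP => _; exact: e.
Qed.

Lemma int_dot : eta.-integrable setT (fun y => (dot h y)%:E) /\
  \int[eta]_y (dot h y)%:E = 0.
Proof.
have E y : (dot h y)%:E = \sum_(j < d.-1) ((tnth h j)%:E * (tnth y j)%:E).
  by rewrite /dot -sumEFin; apply: eq_bigr => j _; rewrite EFinM.
under eq_fun do rewrite E.
split.
  apply: integrable_sum => // j _; apply: integrableZl => //; exact: eta_mom.
rewrite integral_sum //; last first.
  by move=> j; apply: integrableZl => //; exact: eta_mom.
rewrite big1 // => j _; rewrite integralZl // eta_mean mule0. by [].
Qed.

Lemma rhoF_T : rhoF setT = 1.
Proof.
rewrite /rhoF /pushM preimage_setT /densY /densF.
transitivity (\int[eta]_y ((1%:E : \bar R) - (dot h y)%:E)).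
  apply: ae_Y.
  - by apply/measurable_EFinP; exact: mgY.
  - apply: emeasurable_funB => //; apply/measurable_EFinP; exact: measurable_dot.
  - by move=> y Yy; rewrite gYE // EFinB.
have [idot idot0] := int_dot.
rewrite integralB //; last exact: finite_measure_integrable_cst.
rewrite idot0 integral_cst // sube0 mul1e; exact: probability_setT.
Qed.


Definition rhoP : set pT -> \bar R := mnormalize rhoF eta.

Lemma rhoPE : rhoP = rhoF.
Proof.
apply/funext => A; rewrite /rhoP /mnormalize /=.
move: rhoF_T; rewrite /rhoF /pushM /densY => ->.
by rewrite onee_eq0 /= invr1 mule1.
Qed.

Lemma int_rhoF A (f : pT -> \bar R) : measurable A -> measurable_fun setT f ->
  (forall x, 0 <= f x) ->
  \int[rhoF]_(x in A) f x = \int[eta]_(y in Sh h @^-1` A) (f (Sh h y) * (gY y)%:E).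
Proof.
move=> mA mf f0; rewrite /rhoF integral_pushM //; last exact: measurable_funTS.
rewrite /densY integral_densF //.
- by apply: mpre => //; exact: mSh.
- apply: measurable_funTS; apply: measurableT_comp => //; exact: mSh.
Qed.

Lemma rhoF_rho_of A : measurable A -> rhoF A = rho_of H h eta A.
Proof.
move=> mA; rewrite /rhoF /pushM /densY /densF /rho_of.
apply: int_patch => y.
have [Yy|Yy] := pselect (Y y).
- have [Ay|Ay] := pselect (A (Sh h y)).
  + by rewrite !patchT // gYE.
  + by rewrite !patchN //; case.
- rewrite (@patchN _ _ _ [set y | Y y /\ A (Sh h y)]); last by case.
  have [Ay|Ay] := pselect ((Sh h @^-1` A) y).
  + by rewrite patchT // gYN.
  + by rewrite patchN.
Qed.

Lemma rhoF_X : rhoF X = 1.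
Proof.
rewrite -rhoF_T /rhoF /pushM /densY /densF preimage_setT.
apply: int_patch => y.
have [SX|SX] := pselect (X (Sh h y)).
  by rewrite !patchT.
rewrite patchN // patchT // gYN // => Yy; apply: SX; exact: Sh_X.
Qed.

Lemma int_phi (phi : R -> R) j : (forall a, (0 <= phi a)%R) -> measurable_fun setT phi ->
  (forall c a, (0 < c)%R -> phi (c * a)%R = (c * phi a)%R) ->
  \int[rhoF]_(x in X) (phi (tnth x j))%:E = \int[eta]_y (phi (tnth y j))%:E.
Proof.
move=> p0 mp hom.
have mf : measurable_fun setT (fun x : pT => (phi (tnth x j))%:E).
  apply/measurable_EFinP; apply: measurableT_comp => //; exact: measurable_tnth.
rewrite int_rhoF //; last 2 first.
  - exact: mXd.
  - by move=> x; rewrite lee_fin.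
transitivity (\int[eta]_y ((phi (tnth (Sh h y) j))%:E * (gY y)%:E)).
  apply: int_patch => y; have [Yy|Yy] := pselect (Y y).
    rewrite !patchT //; exact: Sh_X.
  rewrite [RHS]patchT // gYN // mule0; have [SX|SX] := pselect (X (Sh h y)); [by rewrite patchT // gYN // mule0 | by rewrite patchN].
apply: ae_Y => //.
- apply: emeasurable_funM.
    exact: (measurableT_comp mf (@mSh R d h)).
  by apply/measurable_EFinP; exact: mgY.
- move=> y Yy; rewrite gYE // /Sh tnth_tscale hom ?invr_gt0 ?Ypos //.
  rewrite -EFinM; congr (_%:E); rewrite mulrAC mulVf ?mul1r //.
  by rewrite lt0r_neq0 // Ypos.
Qed.

Lemma rho_integrable j : rhoF.-integrable X (fun x => (tnth x j)%:E).
Proof.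
have mt : measurable_fun setT (fun x : pT => (tnth x j)%:E).
  apply/measurable_EFinP; exact: measurable_tnth.
  apply/integrableP; split; first exact: measurable_funTS.
  under eq_integral do rewrite abse_EFin.
  rewrite (@int_phi (Num.norm) j) //.
  - have /integrableP[_] := eta_mom j.
    by under eq_integral do rewrite abse_EFin.
  - by move=> c a c0; rewrite normrM gtr0_norm.
Qed.

Lemma rho_int0 j : \int[rhoF]_(x in X) (tnth x j)%:E = 0.
Proof.
rewrite integralE.
rewrite (eq_integral (fun x : pT => (Num.max (tnth x j) 0%R)%:E)); last first.
  by move=> x _; rewrite funeposE EFin_max.
rewrite [X in _ - X](eq_integral (fun x : pT => (Num.max (- tnth x j)%R 0%R)%:E)); last first.
  by move=> x _; rewrite funenegE EFin_max.
rewrite (@int_phi (fun a : R => Num.max a 0%R) j); last 3 first.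
  - by move=> a; rewrite le_max lexx orbT.
  - exact: measurable_maxr.
  - by move=> c a c0; rewrite maxr_pMr ?ltW // mulr0.
rewrite (@int_phi (fun a : R => Num.max (- a)%R 0%R) j); last 3 first.
  - by move=> a; rewrite le_max lexx orbT.
  - exact: measurable_maxr.
  - by move=> c a c0; rewrite maxr_pMr ?ltW // mulr0 mulrN.
rewrite -(eta_mean j) [in RHS]integralE.
congr (_ - _); apply: eq_integral => y _.
  by rewrite funeposE EFin_max.
by rewrite funenegE EFin_max.
Qed.

Lemma rho_fiber B : measurable B ->
  \int[rhoF]_(x in [set x | X x /\ (0 < 1 + dot h x)%R /\ B (Th h x)]) (1 + dot h x)%:E = eta B.
Proof.
move=> mB.
set D := [set x | _].
have mD : measurable D.
  apply: measurableI; first exact: mXd.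
  apply: measurableI.
    by apply: measurable_lt0; apply: measurable_funD => //; exact: measurable_dot.
  by apply: mpre => //; exact: mTh.
have mf : measurable_fun setT (fun x : pT => (Num.max (1 + dot h x) 0)%:E).
  apply/measurable_EFinP; apply: measurable_maxr => //.
  by apply: measurable_funD => //; exact: measurable_dot.
transitivity (\int[rhoF]_(x in D) (Num.max (1 + dot h x) 0)%:E).
  apply: eq_integral => x; rewrite inE => -[_ [p _]]; congr (_%:E).
  by apply/esym/max_idPl; exact: ltW.
rewrite int_rhoF //; last by move=> x; rewrite lee_fin le_max lexx orbT.
transitivity (\int[eta]_y (\1_B y)%:E); last first.
  by rewrite integral_indic // setIT.
have mS : measurable (Sh h @^-1` D) by apply: mpre => //; exact: mSh.
rewrite integral_mkcond; apply: ae_Y.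
- apply/(measurable_restrictT _ mS).
  apply: measurable_funTS; apply: emeasurable_funM.
    exact: (measurableT_comp mf (@mSh R d h)).
  by apply/measurable_EFinP; exact: mgY.
- by apply/measurable_EFinP; exact: measurable_indic.
- move=> y Yy; have p := Ypos _ Yy.
  have [By|By] := pselect (B y).
  + rewrite patchT; last first.
      split; first exact: Sh_X.
      by rewrite Shh // invr_gt0; split => //; rewrite ThSh'.
    rewrite indicE mem_set // Shh // gYE //.
    rewrite (_ : Num.max _ _ = (1 - dot h y)^-1)%R; last first.
      by apply/max_idPl; rewrite invr_ge0 ltW.
    by rewrite -EFinM mulVf // lt0r_neq0.
  + rewrite patchN ?indicE ?memNset //.
    by move=> [_ [_]]; rewrite ThSh'.
Qed.

End exist.

Section uniq.
Context (R : realType) (d : nat) (H : 'M[R]_(d, d.-1)) (h : pt R d.-1).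
Hypothesis hd : (2 <= d)%N.
Hypothesis Horth : orthonormal_cols H.
Hypothesis Hspan : spans_Td H.
Variable eta : probability (pt R d.-1) R.
Variable rho' : probability (pt R d.-1) R.
Hypothesis fib : fiber_is H h rho' eta.

Local Notation Y := (Yh H h).
Local Notation X := (Xd H).
Local Notation pT := (pt R d.-1).

Let Ypos y : Y y -> 0 < 1 - dot h y. Proof. exact: Yh_pos. Qed.

Definition Eset : set pT := [set x | X x /\ 0 < 1 + dot h x].

Lemma mEset : measurable Eset.
Proof.
apply: measurableI; first exact: mXd.
by apply: measurable_lt0; apply: measurable_funD => //; exact: measurable_dot.
Qed.

Definition wE (x : pT) : R := Num.max (1 + dot h x) 0 * \1_Eset x.

Lemma mwE : measurable_fun setT wE.
Proof.
apply: measurable_funM; last by apply: measurable_indic; exact: mEset.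
apply: measurable_maxr => //; apply: measurable_funD => //; exact: measurable_dot.
Qed.

Lemma wE0 x : 0 <= wE x.
Proof. by rewrite /wE mulr_ge0 // ?le_max ?lexx ?orbT. Qed.

Lemma wEE x : Eset x -> wE x = 1 + dot h x.
Proof.
move=> Ex; rewrite /wE indicE mem_set // mulr1.
by apply/max_idPl; rewrite ltW //; case: Ex.
Qed.

Lemma wEN x : ~ Eset x -> wE x = 0.
Proof. by move=> Ex; rewrite /wE indicE memNset // mulr0. Qed.

Definition densE := @densF _ _ _ rho' wE mwE wE0.
Definition muE := @pushM _ _ _ _ _ densE (Th h) (@mTh R d h).

Local Open Scope ereal_scope.

Lemma muE_eta B : measurable B -> muE B = eta B.
Proof.
move=> mB; rewrite -(fib _ mB) /muE /pushM /densE /densF.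
apply: int_patch => x.
have [Ex|Ex] := pselect (Eset x).
- have [Bx|Bx] := pselect (B (Th h x)).
  + rewrite !patchT //; first by rewrite wEE.
    by case: Ex => Xx p; split.
  + by rewrite !patchN // => -[_ [_]].
- rewrite [RHS]patchN; last by move=> [Xx [p _]]; apply: Ex.
  have [Bx|Bx] := pselect (B (Th h x)).
  + by rewrite patchT // wEN.
  + by rewrite patchN.
Qed.

Lemma rho'_E A : measurable A -> rho' (A `&` Eset) = rho_of H h eta A.
Proof.
move=> mA.
set S := [set y | Y y /\ A (Sh h y)].
have mS : measurable S.
  apply: measurableI; first exact: mYh.
  by apply: mpre => //; exact: mSh.
have mTS : measurable (Th h @^-1` S) by apply: mpre => //; exact: mTh.
have mf : measurable_fun setT (fun y : pT => (Num.max (1 - dot h y) 0)%:E).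
  apply/measurable_EFinP; apply: measurable_maxr => //.
  by apply: measurable_funB => //; exact: measurable_dot.
rewrite /rho_of -/S.
rewrite (eq_measure_integral muE); last first.
  by move=> B mB _; apply/esym; exact: (muE_eta _ mB).
transitivity (\int[muE]_(y in S) (Num.max (1 - dot h y) 0)%:E); last first.
  apply: eq_integral => y; rewrite inE => -[Yy _]; congr (_%:E).
  by apply/max_idPl; rewrite ltW // Ypos.
rewrite /muE integral_pushM //; last 2 first.
  - exact: measurable_funTS.
  - by move=> y _; rewrite lee_fin le_max lexx orbT.
rewrite /densE integral_densF //; last 2 first.
  - by move=> x; rewrite lee_fin le_max lexx orbT.
  - by apply: measurable_funTS; exact: (measurableT_comp mf (@mTh R d h)).
rewrite -[LHS]mul1e -(integral_cst rho' _ 1); last first.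
  by apply: measurableI => //; exact: mEset.
apply: int_patch => x.
have [Ex|Ex] := pselect (Eset x).
- have p : (0 < 1 + dot h x)%R by case: Ex.
  have YT : Y (Th h x) by case: Ex => Xx _; exact: Th_Y.
  have STx : Sh h (Th h x) = x by exact: ShTh.
  have [Ax|Ax] := pselect (A x).
  + rewrite !patchT //; last by rewrite /preimage /S /= STx.
    rewrite /= wEE // Th_h // (_ : Num.max _ _ = (1 + dot h x)^-1)%R; last first.
      by apply/max_idPl; rewrite invr_ge0 ltW.
    by rewrite -EFinM mulVf // lt0r_neq0.
  + rewrite !patchN //; first by move=> [_]; rewrite /= STx.
    by case.
- rewrite patchN; last by case.
  have [Sx|Sx] := pselect ((Th h @^-1` S) x).
  + by rewrite patchT // wEN // mule0.
  + by rewrite patchN.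
Qed.

End uniq.

Theorem theorem3p6 (R : realType) (d : nat) (hd : (2 <= d)%N)
  (H : 'M[R]_(d, d.-1)) (Horth : orthonormal_cols H) (Hspan : spans_Td H)
  (h : pt R d.-1) (hint : interiorH H h)
  (eta : probability (pt R d.-1) R)
  (etaY : eta (Yh H h) = 1%E)
  (eta_mom : forall j : 'I_d.-1, eta.-integrable setT (fun y => (tnth y j)%:E))
  (eta_mean : forall j : 'I_d.-1, (\int[eta]_y (tnth y j)%:E = 0)%E) :
  (exists rho : probability (pt R d.-1) R,
      (forall A, measurable A -> rho A = rho_of H h eta A) /\
      anchored H rho /\ fiber_is H h rho eta) /\
  (forall rho' : probability (pt R d.-1) R,
      anchored H rho' -> fiber_is H h rho' eta ->
      forall A, measurable A -> rho' A = rho_of H h eta A).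
Proof.
have rT := @rhoF_T R d H h hd Horth Hspan eta etaY eta_mom eta_mean.
split.
  pose P : probability (pt R d.-1) R := mnormalize (rhoF R d H h eta) eta.
  have EP : (P : set (pt R d.-1) -> \bar R) = rhoF R d H h eta.
    exact: (@rhoPE R d H h hd Horth Hspan eta etaY eta_mom eta_mean).
  exists P; split.
    move=> A mA; rewrite EP; exact: (@rhoF_rho_of R d H h hd Horth Hspan eta A mA).
  split.
    split; first by rewrite EP; exact: (@rhoF_X R d H h hd Horth Hspan eta etaY eta_mom eta_mean).
    move=> j; rewrite EP; split.
      exact: (@rho_integrable R d H h hd Horth Hspan eta etaY eta_mom j).
    exact: (@rho_int0 R d H h hd Horth Hspan eta etaY eta_mean j).
  move=> B mB; rewrite EP; exact: (@rho_fiber R d H h hd Horth Hspan eta etaY B mB).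
move=> rho' _ fib A mA.
have mE := mEset R d H h.
have E1 : rho' (Eset R d H h) = 1%E.
  have := @rho'_E R d H h hd Horth Hspan eta rho' fib setT measurableT.
  by rewrite setTI -(@rhoF_rho_of R d H h hd Horth Hspan eta setT measurableT) rT.
have EC : rho' (~` Eset R d H h) = 0%E.
  by rewrite probability_setC // E1 subee.
rewrite -(@rho'_E R d H h hd Horth Hspan eta rho' fib A mA).
have -> : A = (A `&` Eset R d H h) `|` (A `&` ~` Eset R d H h).
  by rewrite -setIUr setUv setIT.
rewrite measureU //; last 3 first.
  - by apply: measurableI.
  - by apply: measurableI => //; exact: measurableC.
  - by rewrite setIACA setICr setI0.
rewrite setIUl -setIA setIid -setIA setICl setI0 setU0.
have Z : rho' (A `&` ~` Eset R d H h) = 0%E.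
  apply/eqP; rewrite eq_le; apply/andP; split; last exact: measure_ge0.
  rewrite -EC.
  apply: le_measure; rewrite ?inE //.
  - by apply: measurableI => //; exact: measurableC.
  - exact: measurableC.
transitivity (rho' (A `&` Eset R d H h) + 0)%E; last by rewrite adde0.
by congr (_ + _)%E; exact: Z.
Qed.
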